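(* Under the standing assumptions, for $0\le j\le n-1$, $$\mathbf m_j=Q_{2,j}(a)^{-1}\,\Gamma_{1,j}(a),\qquad \mathbf l_j=-\Gamma_{1,j+1}(a)^{-1}\,Q_{2,j}(a).$$ In particular $\mathbf m_0=Q_{2,0}(a)^{-1}$.
   Context: Let $q,n\in\mathbb N$ and let $a<b$ be real numbers. All matrices are complex; $I_q$, $0_q$ are the $q\times q$ identity and zero matrices. Let $s_0,\dots,s_{2n+1}$ be Hermitian $q\times q$ matrices and set $\widehat s_j:=-ab\,s_j+(a+b)s_{j+1}-s_{j+2}$. Define $H_{1,j}:=(s_{l+k})_{l,k=0}^j$, $H_{2,j}:=(\widehat s_{l+k})_{l,k=0}^{j}$, $K_{1,j}:=(bs_{l+k}-s_{l+k+1})_{l,k=0}^{j}$, $K_{2,j}:=(-as_{l+k}+s_{l+k+1})_{l,k=0}^j$. Standing assumption: $H_{1,n},H_{2,n-1},K_{1,n},K_{2,n}$ are positive definite. Let $T_0:=0_q$ and, for $j\ge1$, let $T_j$ be the $(j+1)\times(j+1)$ block matrix (blocks $q\times q$) with $I_q$ in block positions $(l+1,l)$, $l=0,\dots,j-1$, and $0_q$ elsewhere; $R_j(z):=(I_{(j+1)q}-zT_j)^{-1}$; $v_j:=\mathrm{col}(I_q,0_q,\dots,0_q)\in\mathbb C^{(j+1)q\times q}$. Let $u_{2,0}:=-(a+b)s_0+s_1$, $u_{2,j}:=\mathrm{col}(u_{2,0},-\widehat s_0,\dots,-\widehat s_{j-1})$; for $j\ge1$, $Y_{2,j}:=\mathrm{col}(\widehat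 s_j,\dots,\widehat s_{2j-1})$, $\widetilde Y_{1,j}:=\mathrm{col}(bs_j-s_{j+1},\dots,bs_{2j-1}-s_{2j})$. Polynomials: $Q_{2,0}(z):=-(u_{2,0}+zs_0)$, $\Gamma_{1,0}:=I_q$; for $j\ge1$: $Q_{2,j}(z):=-(-Y_{2,j}^*H_{2,j-1}^{-1},I_q)R_j(z)(u_{2,j}+zv_js_0)$, $\Gamma_{1,j}(z):=(-\widetilde Y_{1,j}^*K_{1,j-1}^{-1},I_q)R_j(z)v_j$. DSM parameters: $\lambda_j:=(u_{2,j}+av_js_0)^*R_j(a)^*H_{2,j}^{-1}R_j(a)(u_{2,j}+av_js_0)$, $\mu_j:=v_j^*R_j(a)^*K_{1,j}^{-1}R_j(a)v_j$; $\mathbf l_0:=\lambda_0$, $\mathbf l_j:=\lambda_j-\lambda_{j-1}$ ($1\le j\le n-1$); $\mathbf m_0:=\mu_0$, $\mathbf m_j:=\mu_j-\mu_{j-1}$ ($1\le j\le n$). *)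

(* Defs.v *)
(* Complex matrices are modelled over an arbitrary
   numClosedFieldType C (e.g. algC, or the complex numbers). *)
From HB Require Import structures.
From mathcomp Require Import all_boot all_order all_algebra.
Set Implicit Arguments. Unset Strict Implicit. Unset Printing Implicit Defensive.
Import Order.TTheory GRing.Theory Num.Theory.
Local Open Scope ring_scope.

Section Defs.
Variable C : numClosedFieldType.

Definition ctmx m n (A : 'M[C]_(m, n)) : 'M[C]_(n, m) := (map_mx Num.conj A)^T.

Definition hermmx n (A : 'M[C]_n) : Prop := ctmx A = A.

Definition posdef n (A : 'M[C]_n) : Prop :=
  hermmx A /\ forall x : 'cV[C]_n, x != 0 -> 0 < (ctmx x *m A *m x) 0 0.

Variable q : nat.

Definition bd (m : nat) : nat := (\sum_(i < m) q)%N.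

Definition hankel (m : nat) (f : nat -> 'M[C]_q) : 'M[C]_(bd m) :=
  @mxblock C m m (fun _ => q) (fun _ => q) (fun l k => f (l + k)%N).

Definition bcol (m : nat) (F : nat -> 'M[C]_q) : 'M[C]_(bd m, q) :=
  @mxcol C m (fun _ => q) q (fun l => F (l : nat)).

Definition brow (m : nat) (F : nat -> 'M[C]_q) : 'M[C]_(q, bd m) :=
  @mxrow C m (fun _ => q) q (fun l => F (l : nat)).

Definition Tmx (j : nat) : 'M[C]_(bd j.+1) :=
  @mxblock C j.+1 j.+1 (fun _ => q) (fun _ => q)
    (fun l k => if (l : nat) == k.+1 then 1%:M else 0).

Definition Rmx (j : nat) (z : C) : 'M[C]_(bd j.+1) := invmx (1%:M - z *: Tmx j).

Definition vmx (j : nat) : 'M[C]_(bd j.+1, q) :=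
  bcol j.+1 (fun l => if l == 0%N then 1%:M else 0).

Lemma bd_recr (j : nat) : (bd j + q)%N = bd j.+1.
Proof. by rewrite /bd big_ord_recr. Qed.

Definition rowI (j : nat) (X : 'M[C]_(q, bd j)) : 'M[C]_(q, bd j.+1) :=
  castmx (erefl q, bd_recr j) (row_mx X 1%:M).

Variables (s : nat -> 'M[C]_q) (a b : C).

Definition shat (j : nat) : 'M[C]_q :=
  - (a * b) *: s j + (a + b) *: s j.+1 - s j.+2.

Definition H1 (j : nat) := hankel j.+1 s.
Definition H2 (j : nat) := hankel j.+1 shat.
Definition K1 (j : nat) := hankel j.+1 (fun i => b *: s i - s i.+1).
Definition K2 (j : nat) := hankel j.+1 (fun i => - a *: s i + s i.+1).

Definition u20 : 'M[C]_q := - (a + b) *: s 0 + s 1.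
Definition u2 (j : nat) : 'M[C]_(bd j.+1, q) :=
  bcol j.+1 (fun l => if l is l'.+1 then - shat l' else u20).

Definition Y2 (j : nat) : 'M[C]_(bd j, q) := bcol j (fun l => shat (j + l)).
Definition Yt1 (j : nat) : 'M[C]_(bd j, q) :=
  bcol j (fun l => b *: s (j + l)%N - s (j + l).+1).

Definition Q2 (j : nat) (z : C) : 'M[C]_q :=
  match j with
  | 0 => - (u20 + z *: s 0)
  | j'.+1 => - (rowI (- (ctmx (Y2 j'.+1) *m invmx (H2 j')))
                 *m Rmx j'.+1 z *m (u2 j'.+1 + z *: (vmx j'.+1 *m s 0)))
  end.

Definition Gamma1 (j : nat) (z : C) : 'M[C]_q :=
  match j with
  | 0 => 1%:M
  | j'.+1 => rowI (- (ctmx (Yt1 j'.+1) *m invmx (K1 j')))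
               *m Rmx j'.+1 z *m vmx j'.+1
  end.

Definition lambda (j : nat) : 'M[C]_q :=
  let w := u2 j + a *: (vmx j *m s 0) in
  ctmx w *m ctmx (Rmx j a) *m invmx (H2 j) *m Rmx j a *m w.

Definition mu (j : nat) : 'M[C]_q :=
  ctmx (vmx j) *m ctmx (Rmx j a) *m invmx (K1 j) *m Rmx j a *m vmx j.

Definition lbold (j : nat) : 'M[C]_q :=
  if j is j'.+1 then lambda j'.+1 - lambda j' else lambda 0.
Definition mbold (j : nat) : 'M[C]_q :=
  if j is j'.+1 then mu j'.+1 - mu j' else mu 0.

End Defs.

(* Main.v *)
Require Import Defs.
From HB Require Import structures.
From mathcomp Require Import all_boot all_order all_algebra.
From mathcomp Require Import zify ring.
Set Implicit Arguments. Unset Strict Implicit. Unset Printing Implicit Defensive.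
Import Order.TTheory GRing.Theory Num.Theory.
Local Open Scope ring_scope.

Section Ct.
Variable C : numClosedFieldType.

Lemma ctmxM m n p (A : 'M[C]_(m, n)) (B : 'M[C]_(n, p)) :
  ctmx (A *m B) = ctmx B *m ctmx A.
Proof. by rewrite /ctmx map_mxM trmx_mul. Qed.
Lemma ctmxK m n (A : 'M[C]_(m, n)) : ctmx (ctmx A) = A.
Proof. by apply/matrixP=> i j; rewrite !mxE conjCK. Qed.
Lemma ctmxD m n (A B : 'M[C]_(m, n)) : ctmx (A + B) = ctmx A + ctmx B.
Proof. by apply/matrixP=> i j; rewrite !mxE rmorphD. Qed.
Lemma ctmxN m n (A : 'M[C]_(m, n)) : ctmx (- A) = - ctmx A.
Proof. by apply/matrixP=> i j; rewrite !mxE rmorphN. Qed.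
Lemma ctmxB m n (A B : 'M[C]_(m, n)) : ctmx (A - B) = ctmx A - ctmx B.
Proof. by rewrite ctmxD ctmxN. Qed.
Lemma ctmxZ m n x (A : 'M[C]_(m, n)) : ctmx (x *: A) = x^* *: ctmx A.
Proof. by apply/matrixP=> i j; rewrite !mxE rmorphM. Qed.
Lemma ctmx0 m n : ctmx (0 : 'M[C]_(m, n)) = 0.
Proof. by apply/matrixP=> i j; rewrite !mxE conjC0. Qed.
Lemma ctmx1 m : ctmx (1%:M : 'M[C]_m) = 1%:M.
Proof. by apply/matrixP=> i j; rewrite !mxE eq_sym; case: (_ == _); rewrite ?conjC0 ?conjC1. Qed.
Lemma ctmx_sum m n I (r : seq I) (P : pred I) (F : I -> 'M[C]_(m, n)) :
  ctmx (\sum_(i <- r | P i) F i) = \sum_(i <- r | P i) ctmx (F i).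
Proof.
by elim/big_rec2: _ => [|i x y _ <-]; rewrite ?ctmx0 ?ctmxD.
Qed.
End Ct.

Section Blocks.
Variables (C : numClosedFieldType) (q : nat).
Local Notation bd := (bd q).

Definition browr r m (c : nat -> 'M[C]_(r, q)) : 'M[C]_(r, bd m) :=
  @mxrow C m (fun _ => q) r (fun l => c l).
Definition bcolr r m (c : nat -> 'M[C]_(q, r)) : 'M[C]_(bd m, r) :=
  @mxcol C m (fun _ => q) r (fun l => c l).
Definition cf r m (X : 'M[C]_(r, bd m)) : nat -> 'M[C]_(r, q) :=
  fun l => oapp (fun i => @submxrow C m (fun _ => q) r X i) 0 (insub l).

Lemma cf_browr r m c l : @cf r m (browr m c) l = if (l < m)%N then c l else 0.
Proof.
rewrite /cf; case: insubP => [i -> <-|/negbTE -> //] /=.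
by rewrite /browr mxrowK.
Qed.

Lemma browr_cf r m (X : 'M[C]_(r, bd m)) : browr m (cf X) = X.
Proof.
apply/mxrowP => i; rewrite mxrowK /cf insubT //= => Hi.
by have -> : Sub (val i) Hi = i by apply: val_inj.
Qed.

Lemma cf_supp r m (X : 'M[C]_(r, bd m)) l : (m <= l)%N -> cf X l = 0.
Proof. by move=> ml; rewrite /cf insubF // ltnNge ml. Qed.

Lemma eq_browr r m (c d : nat -> 'M[C]_(r, q)) :
  (forall l, (l < m)%N -> c l = d l) -> browr m c = browr m d.
Proof. by move=> H; apply: eq_mxrow => i; apply: H. Qed.

Lemma ctmx_browr r m c : ctmx (@browr r m c) = bcolr m (fun l => ctmx (c l)).
Proof. by apply/matrixP => i j; rewrite !mxE. Qed.
Lemma ctmx_bcolr r m c : ctmx (@bcolr r m c) = browr m (fun l => ctmx (c l)).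
Proof. by apply/matrixP => i j; rewrite !mxE. Qed.

Lemma browr_bcolr r r' m c d :
  @browr r m c *m @bcolr r' m d = \sum_(l < m) c l *m d l.
Proof. by rewrite /browr /bcolr mul_mxrow_mxcol. Qed.

Lemma browr_hankel r m c f :
  @browr r m c *m hankel m f = browr m (fun i => \sum_(l < m) c l *m f (l + i)%N).
Proof.
rewrite /browr /hankel mul_mxrow_mxblock; apply: eq_mxrow => i.
by apply: eq_bigr.
Qed.

Lemma browr_mul r r' m c (A : 'M[C]_(r', r)) :
  A *m @browr r m c = browr m (fun l => A *m c l).
Proof. by rewrite /browr mul_mxrow. Qed.

Lemma bcolr_mul r r' m c (A : 'M[C]_(r, r')) :
  @bcolr r m c *m A = bcolr m (fun l => c l *m A).
Proof. by rewrite /bcolr mxcol_mul. Qed.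

Lemma bcolrD r m c d : @bcolr r m c + bcolr m d = bcolr m (fun l => c l + d l).
Proof. by apply/matrixP => i j; rewrite !mxE. Qed.
Lemma bcolrN r m c : - @bcolr r m c = bcolr m (fun l => - c l).
Proof. by apply/matrixP => i j; rewrite !mxE. Qed.
Lemma bcolrZ r m x c : x *: @bcolr r m c = bcolr m (fun l => x *: c l).
Proof. by apply/matrixP => i j; rewrite !mxE. Qed.
Lemma eq_bcolr r m (c d : nat -> 'M[C]_(q, r)) :
  (forall l, (l < m)%N -> c l = d l) -> bcolr m c = bcolr m d.
Proof. by move=> H; apply: eq_mxcol => i; apply: H. Qed.

End Blocks.

Section Idx.
Variables (q : nat).
Lemma bdE m : bd q m = (m * q)%N.
Proof. by rewrite /bd sum_nat_const card_ord. Qed.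

Lemma sumq_lt m l : (l <= m)%N -> (\sum_(k < m | (k < l)%N) q)%N = (l * q)%N.
Proof.
move=> lm; rewrite -(big_mkord (fun k => k < l)%N (fun _ => q)).
have -> : (\sum_(0 <= k < m | (k < l)%N) q = \sum_(0 <= k < l) q)%N.
  by rewrite (big_nat_widen 0 l m) //.
by rewrite big_mkord sum_nat_const card_ord.
Qed.

Lemma rectq m (s : 'I_(bd q m)) :
  val s = (@tagnat.sig1 m (fun _ => q) s * q + @tagnat.sig2 m (fun _ => q) s)%N.
Proof. by rewrite [LHS](tagnat.rect s) sumq_lt // ltnW. Qed.

Lemma Rankq m (l : 'I_m) (t : 'I_q) :
  val (@tagnat.Rank m (fun _ => q) l t) = (l * q + t)%N.
Proof. by rewrite [LHS]tagnat.RankEsum sumq_lt // ltnW. Qed.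
End Idx.


Section Blk2.
Variables (C : numClosedFieldType) (q : nat).
Local Notation bd := (bd q).

Lemma cf_entry r m (X : 'M[C]_(r, bd m)) (l : 'I_m) i w :
  cf X l i w = X i (@tagnat.Rank m (fun _ => q) l w).
Proof.
rewrite /cf insubT //= => Hl.
have -> : Sub (val l) Hl = l by apply: val_inj.
by rewrite mxE.
Qed.

Lemma browr_entry r m c i (t : 'I_(bd m)) :
  @browr C q r m c i t = c (@tagnat.sig1 m (fun _ => q) t) i (@tagnat.sig2 m (fun _ => q) t).
Proof. by rewrite mxE. Qed.

Lemma rowIE j (X : 'M[C]_(q, bd j)) :
  rowI X = browr j.+1 (fun l => if (l < j)%N then cf X l else if l == j then 1%:M else 0).
Proof.
apply/matrixP => i t; rewrite browr_entry castmxE mxE /=.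
set s := tagnat.sig1 t; set w := tagnat.sig2 t.
have Ht : (t : nat) = (s * q + w)%N := rectq t.
have wq := ltn_ord w.
case: splitP => [u|u] /= Hu.
  have uj : (u < j * q)%N by rewrite -bdE ltn_ord.
  have sj : (s < j)%N.
    rewrite ltnNge; apply/negP => js.
    have : (j * q <= s * q)%N by rewrite leq_mul2r js orbT.
    rewrite /= in Hu; lia.
  rewrite sj.
  have -> : s = Ordinal sj :> nat by [].
  rewrite cf_entry cast_ord_id; congr (X i _); apply: val_inj; rewrite Rankq /=; lia.
have uq := ltn_ord u.
have Hu' : (t : nat) = (j * q + u)%N by rewrite -bdE.
have sj : (s : nat) = j.
  have : ((s * q + w) %/ q = (j * q + u) %/ q)%N by rewrite -Ht Hu'.
  by rewrite !divnMDl ?divn_small ?addn0 //; lia.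
rewrite sj ltnn eqxx !mxE cast_ord_id.
have -> : u = w :> 'I_q by apply: val_inj => /=; lia.
by [].
Qed.
End Blk2.

Section Tm.
Variables (C : numClosedFieldType) (q : nat).
Local Notation bd := (bd q).

Lemma Tmx_bcolr r j (G : nat -> 'M[C]_(q, r)) :
  Tmx C q j *m bcolr j.+1 G = bcolr j.+1 (fun l => if l is l'.+1 then G l' else 0).
Proof.
rewrite /Tmx /bcolr mul_mxblock_mxrow; apply: eq_mxcol => i.
case: i => [[|i'] Hi] /=.
  by rewrite big1 // => k _; rewrite /= mul0mx.
have Hi' : (i' < j.+1)%N by apply: ltnW.
rewrite (bigD1 (Ordinal Hi')) //= eqxx mul1mx big1 ?addr0 // => k Hk.
have -> : (i'.+1 == k.+1) = false.
  by apply/negbTE; rewrite eqSS; apply: contra Hk => /eqP e; apply/eqP/val_inj.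
by rewrite mul0mx.
Qed.

Lemma Tmx_entry j (s t : 'I_(bd j.+1)) : (s <= t)%N -> Tmx C q j s t = 0.
Proof.
move=> st; rewrite /Tmx mxE.
have Hs := rectq s; have Ht := rectq t.
case: eqP => [e|_]; last by rewrite mxE.
exfalso; move: Hs Ht; rewrite e.
set w := tagnat.sig2 s; set w' := tagnat.sig2 t.
have := ltn_ord w; have := ltn_ord w'.
move: (tagnat.sig1 t : nat) => x. move=> h1 h2 h3 h4. simpl in *. nia.
Qed.

Lemma IaA_entry m (A : 'M[C]_m) (a : C) i k :
  (1%:M - a *: A) i k = (i == k)%:R - a * A i k.
Proof. by rewrite !mxE. Qed.

Lemma det_IaT j (a : C) : \det (1%:M - a *: Tmx C q j) = 1.
Proof.
rewrite det_trig.
  rewrite big1 // => i _.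
  by rewrite IaA_entry (Tmx_entry (leqnn i)) eqxx mulr0 subr0.
apply/is_trig_mxP => i k ik.
by rewrite IaA_entry (Tmx_entry (ltnW ik)) -(inj_eq val_inj) /= (ltn_eqF ik) mulr0 subr0.
Qed.

Lemma unit_IaT j (a : C) : (1%:M - a *: Tmx C q j) \in unitmx.
Proof. by rewrite unitmxE det_IaT unitr1. Qed.
End Tm.

Section Poly.
Variables (C : numClosedFieldType) (q N : nat) (a : C).
Hypothesis ha : a^* = a.

Definition mom r (f : nat -> 'M[C]_q) (c : nat -> 'M[C]_(r, q)) i : 'M[C]_(r, q) :=
  \sum_(l < N) c l *m f (l + i)%N.
Definition form r r' f (c : nat -> 'M[C]_(r, q)) (d : nat -> 'M[C]_(r', q)) : 'M[C]_(r, r') :=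
  \sum_(i < N) mom f c i *m ctmx (d i).
Definition ev r (c : nat -> 'M[C]_(r, q)) : 'M[C]_(r, q) := \sum_(l < N) a ^+ l *: c l.
Definition supp r (c : nat -> 'M[C]_(r, q)) m := forall l, (m <= l)%N -> c l = 0.

Lemma sum_single (V : zmodType) (F : nat -> V) j : (j < N)%N ->
  (forall i, i != j -> F i = 0) -> \sum_(i < N) F i = F j.
Proof.
move=> jN H; rewrite (bigD1 (Ordinal jN)) //= big1 ?addr0 // => i ne.
by apply: H; apply: contra ne => /eqP e; apply/eqP/val_inj.
Qed.

Lemma sum_supp (V : zmodType) (F : nat -> V) m : (m <= N)%N ->
  (forall i, (m <= i)%N -> F i = 0) -> \sum_(i < N) F i = \sum_(i < m) F i.
Proof.
move=> mN H; rewrite -(subnKC mN) big_split_ord /= [X in _ + X]big1 ?addr0 //.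
by move=> i _; apply: H; apply: leq_addr.
Qed.

Lemma form_mono r f (c : nat -> 'M_(r, q)) (d : nat -> 'M_q) j :
  (j < N)%N -> supp d j.+1 -> d j = 1%:M -> (forall i, (i < j)%N -> mom f c i = 0) ->
  form f c d = mom f c j.
Proof.
move=> jN sd dj mc; rewrite /form (@sum_single _ (fun i => mom f c i *m ctmx (d i)) j) //.
  by rewrite dj ctmx1 mulmx1.
move=> i ne; case: (ltngtP i j) => [ij|ji|e]; last by rewrite e eqxx in ne.
  by rewrite mc // mul0mx.
by rewrite sd // ctmx0 mulmx0.
Qed.

Lemma form_orth0 r r' f (c : nat -> 'M_(r, q)) (d : nat -> 'M_(r', q)) j :
  supp d j -> (forall i, (i < j)%N -> mom f c i = 0) -> form f c d = 0.
Proof.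
move=> sd mc; rewrite /form big1 // => i _.
case: (ltnP i j) => ij; first by rewrite mc // mul0mx.
by rewrite sd // ctmx0 mulmx0.
Qed.

Lemma form_herm r r' f (c : nat -> 'M_(r, q)) (d : nat -> 'M_(r', q)) M :
  (forall i, (i <= 2 * M)%N -> ctmx (f i) = f i) -> supp c M.+1 -> supp d M.+1 ->
  ctmx (form f c d) = form f d c.
Proof.
move=> hf sc sd; rewrite /form /mom ctmx_sum.
under eq_bigr do rewrite ctmxM ctmxK ctmx_sum mulmx_sumr.
rewrite exchange_big /=; apply: eq_bigr => l _; rewrite mulmx_suml.
apply: eq_bigr => i _; rewrite ctmxM mulmxA.
case: (leqP l M) => lM; last by rewrite sc // ctmx0 mulmx0 mulmx0.
case: (leqP i M) => iM; last by rewrite sd // !mul0mx.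
by rewrite addnC hf //; lia.
Qed.

Lemma mom_mull r r' f (A : 'M_(r', r)) (c : nat -> 'M_(r, q)) i :
  mom f (fun l => A *m c l) i = A *m mom f c i.
Proof. by rewrite /mom mulmx_sumr; apply: eq_bigr => l _; rewrite mulmxA. Qed.

Lemma mom_add r f (c d : nat -> 'M_(r, q)) i :
  mom f (fun l => c l + d l) i = mom f c i + mom f d i.
Proof. by rewrite /mom -big_split; apply: eq_bigr => l _; rewrite mulmxDl. Qed.

Lemma mom_opp r f (c : nat -> 'M_(r, q)) i :
  mom f (fun l => - c l) i = - mom f c i.
Proof. by rewrite /mom -sumrN; apply: eq_bigr => l _; rewrite mulNmx. Qed.

Lemma form_mull r r' r'' f (A : 'M_(r'', r)) (c : nat -> 'M_(r, q)) (d : nat -> 'M_(r', q)) :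
  form f (fun l => A *m c l) d = A *m form f c d.
Proof.
rewrite /form mulmx_sumr; apply: eq_bigr => i _; by rewrite mom_mull mulmxA.
Qed.

Lemma form_add r r' f (c c' : nat -> 'M_(r, q)) (d : nat -> 'M_(r', q)) :
  form f (fun l => c l + c' l) d = form f c d + form f c' d.
Proof. by rewrite /form -big_split; apply: eq_bigr => i _; rewrite mom_add mulmxDl. Qed.

Lemma form_opp r r' f (c : nat -> 'M_(r, q)) (d : nat -> 'M_(r', q)) :
  form f (fun l => - c l) d = - form f c d.
Proof. by rewrite /form -sumrN; apply: eq_bigr => i _; rewrite mom_opp mulNmx. Qed.

Lemma ev_ct r (c : nat -> 'M_(r, q)) : ctmx (ev c) = \sum_(l < N) a ^+ l *: ctmx (c l).
Proof.
rewrite /ev ctmx_sum; apply: eq_bigr => l _; rewrite ctmxZ; congr (_ *: _); rewrite rmorphXn; congr (_ ^+ _); exact: ha.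
Qed.

Lemma mom_shift r k h (c : nat -> 'M_(r, q)) i :
  (forall i, h i = k i.+1 - a *: k i) -> mom h c i = mom k c i.+1 - a *: mom k c i.
Proof.
move=> hk; rewrite /mom scaler_sumr -sumrB; apply: eq_bigr => l _.
by rewrite hk addnS mulmxBr scalemxAr.
Qed.



Lemma eq_mom r f (c c' : nat -> 'M_(r, q)) i : (forall l, c l = c' l) -> mom f c i = mom f c' i.
Proof. by move=> H; apply: eq_bigr => l _; rewrite H. Qed.
Lemma eq_form r r' f (c c' : nat -> 'M_(r, q)) (d : nat -> 'M_(r', q)) :
  (forall l, c l = c' l) -> form f c d = form f c' d.
Proof. by move=> H; apply: eq_bigr => i _; rewrite (eq_mom _ _ H). Qed.

Definition Uprop f M := forall r (c : nat -> 'M[C]_(r, q)), supp c M -> form f c c = 0 ->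
  forall l, c l = 0.

Lemma zero_of_moms f M j r (c : nat -> 'M_(r, q)) : Uprop f M -> (j < M)%N -> supp c j.+1 ->
  (forall i, (i <= j)%N -> mom f c i = 0) -> forall l, c l = 0.
Proof.
move=> U jM sc mc; apply: U.
  by move=> l Ml; apply: sc; apply: leq_trans Ml.
by apply: (form_orth0 (j := j.+1)).
Qed.

Lemma inj_unit n (A : 'M[C]_n) : (forall v : 'rV_n, v *m A = 0 -> v = 0) -> A \in unitmx.
Proof.
move=> H; rewrite -row_free_unit -kermx_eq0; apply/eqP/row_matrixP => i.
by rewrite row0; apply: H; rewrite -row_mul mulmx_ker row0.
Qed.

Lemma schur_unit f M j (c : nat -> 'M_q) : Uprop f M -> (j < M)%N -> supp c j.+1 ->
  c j = 1%:M -> (forall i, (i < j)%N -> mom f c i = 0) -> mom f c j \in unitmx.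
Proof.
move=> U jM sc cj mc; apply: inj_unit => u uS.
have sw : supp (fun l => u *m c l) j.+1 by move=> l jl; rewrite (sc l jl) mulmx0.
have mw : forall i, (i <= j)%N -> mom f (fun l => u *m c l) i = 0.
  move=> i; rewrite leq_eqVlt => /orP [/eqP ->|ij]; rewrite mom_mull; first exact: uS.
  by rewrite (mc i ij) mulmx0.
have := @zero_of_moms f M j 1 (fun l => u *m c l) U jM sw mw j.
by rewrite cj mulmx1.
Qed.

Lemma stepA k h j (r : nat -> 'M_q) : (forall i, h i = k i.+1 - a *: k i) ->
  (forall i, (i < j)%N -> mom h r i = 0) ->
  forall i, (i <= j)%N -> mom k r i = a ^+ i *: mom k r 0.
Proof.
move=> hk or; elim => [|i IH] ij; first by rewrite expr0 scale1r.
have := mom_shift r i hk; rewrite (or i ij) => /eqP; rewrite eq_sym subr_eq0 => /eqP ->.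
by rewrite (IH (ltnW ij)) scalerA exprS.
Qed.

Lemma form_eval r f j (c : nat -> 'M_(r, q)) (p : nat -> 'M_q) (B : 'M_(r, q)) :
  supp p j.+1 -> (forall i, (i <= j)%N -> mom f c i = a ^+ i *: B) ->
  form f c p = B *m ctmx (ev p).
Proof.
move=> sp mc; rewrite ev_ct /form mulmx_sumr; apply: eq_bigr => i _.
case: (leqP i j) => ij; first by rewrite (mc i ij) -scalemxAl scalemxAr.
by rewrite (sp i ij) ctmx0 mulmx0 scaler0 mulmx0.
Qed.

Theorem C1 k h j M (p r z z' : nat -> 'M_q) :
  (forall i, h i = k i.+1 - a *: k i) -> Uprop k M -> (j < M)%N -> (j < N)%N ->
  (forall i, (i <= 2 * j)%N -> ctmx (k i) = k i) ->
  supp p j.+1 -> p j = 1%:M -> (forall i, (i < j)%N -> mom k p i = 0) ->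
  supp r j.+1 -> r j = 1%:M -> (forall i, (i < j)%N -> mom h r i = 0) ->
  supp z j.+1 -> (forall i, (i <= j)%N -> mom k z i = a ^+ i *: 1%:M) ->
  supp z' j -> (forall i, (i < j)%N -> mom k z' i = a ^+ i *: 1%:M) ->
  mom k r 0 \in unitmx /\ ev z - ev z' = invmx (mom k r 0) *m ev p.
Proof.
move=> hk U jM jN Hk sp pj op sr rj or sz mz sz' mz'.
set Q := mom k r 0; set S := mom k p j; set G := ev p.
have sz'1 : supp z' j.+1 by move=> l jl; apply: sz'; apply: ltnW.
have A := stepA hk or.
have FB : form k r p = Q *m ctmx G.
  by apply: (form_eval sp) => i ij; rewrite (A i ij).
have FS : form k p r = S by apply: (form_mono jN sr rj op).
have FSS : form k p p = S by apply: (form_mono jN sp pj op).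
have SH : ctmx S = S by rewrite -FSS (form_herm Hk sp sp).
have QG : Q *m ctmx G = S by rewrite -FB -(form_herm Hk sp sr) FS SH.
have Su : S \in unitmx by apply: (schur_unit U jM sp pj op).
have /andP [Qu Gu] : (Q \in unitmx) && (ctmx G \in unitmx) by rewrite -unitmx_mul QG.
split; first exact: Qu.
set d := fun l => (z l - z' l) - invmx Q *m p l.
have md : forall i, (i < j)%N -> mom k d i = 0.
  move=> i ij; rewrite /d mom_add mom_opp mom_mull mom_add mom_opp (mz i (ltnW ij)) (mz' i ij).
  by rewrite (op i ij) mulmx0 subrr subr0.
have sd : supp d j.+1.
  by move=> l jl; rewrite /d (sz l jl) (sz'1 l jl) (sp l jl) mulmx0 subrr subr0.
have d0 : forall l, d l = 0.
  apply: (zero_of_moms U jM sd).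
  move=> i; rewrite leq_eqVlt => /orP [/eqP ->|]; last by apply: md.
  rewrite -(form_mono jN sp pj md) /d form_add form_opp form_mull form_add form_opp.
  have -> : form k z p = 1%:M *m ctmx G by apply: (form_eval sp mz).
  have -> : form k z' p = 0.
    by rewrite -(form_herm Hk sp sz'1) (form_orth0 sz' op) ctmx0.
  by rewrite FSS -QG (mulKmx Qu) mul1mx oppr0 addr0 subrr.
rewrite /ev -sumrB mulmx_sumr; apply: eq_bigr => l _; rewrite -scalerBr.
have := d0 l; rewrite /d => /eqP; rewrite subr_eq0 => /eqP ->.
by rewrite scalemxAr.
Qed.

Theorem C2 k h j M (p' r y y' : nat -> 'M_q) :
  (forall i, h i = k i.+1 - a *: k i) -> Uprop h M -> (j < M)%N -> (j.+1 < N)%N ->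
  (forall i, (i <= 2 * j.+1)%N -> ctmx (k i) = k i) ->
  (forall i, (i <= 2 * j)%N -> ctmx (h i) = h i) ->
  supp p' j.+2 -> p' j.+1 = 1%:M -> (forall i, (i <= j)%N -> mom k p' i = 0) ->
  supp r j.+1 -> r j = 1%:M -> (forall i, (i < j)%N -> mom h r i = 0) ->
  supp y j.+1 -> (forall i, (i <= j)%N -> mom h y i = k i) ->
  supp y' j -> (forall i, (i < j)%N -> mom h y' i = k i) ->
  ev p' \in unitmx /\ mom k y 0 - mom k y' 0 = - (invmx (ev p') *m mom k r 0).
Proof.
move=> hk U jM jN Hk Hh sp pj op sr rj or sy my sy' my'.
have jN' : (j < N)%N by apply: ltnW.
set Q := mom k r 0; set P := mom h r j; set G := ev p'.
have sy'1 : supp y' j.+1 by move=> l jl; apply: sy'; apply: ltnW.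
have sr2 : supp r j.+2 by move=> l jl; apply: sr; apply: ltnW.
have A := stepA hk or.
have Aj1 : mom k r j.+1 = a ^+ j.+1 *: Q + P.
  have := mom_shift r j hk; rewrite -/P => /eqP; rewrite eq_sym subr_eq => /eqP ->.
  by rewrite (A j (leqnn j)) scalerA -exprS addrC.
have F0 : form k r p' = 0.
  rewrite -(form_herm Hk sp sr2).
  have -> : form k p' r = 0 by apply: (form_orth0 sr) => i; rewrite ltnS; apply: op.
  exact: ctmx0.
have F1 : form k r p' = Q *m ctmx G + P.
  have E : \sum_(i < N) (if (i : nat) == j.+1 then P else 0) *m ctmx (p' i) = P.
    rewrite (@sum_single _ (fun i => (if i == j.+1 then P else 0) *m ctmx (p' i)) j.+1 jN).
      by rewrite eqxx pj ctmx1 mulmx1.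
    by move=> i /negbTE ->; rewrite mul0mx.
  rewrite /form ev_ct mulmx_sumr -[P in RHS]E -big_split /=; apply: eq_bigr => i _.
  case: (ltngtP i j.+1) => ij.
  - by rewrite (A i ij) mul0mx addr0 -scalemxAl scalemxAr.
  - by rewrite (sp i ij) ctmx0 !mulmx0 scaler0 mulmx0 addr0.
  - by rewrite ij Aj1 mulmxDl -scalemxAl scalemxAr.
have PQ : P = - (Q *m ctmx G) by apply/eqP; rewrite -addr_eq0 addrC -F1 F0.
have FP : form h r r = P by apply: (form_mono jN' sr rj or).
have PH : ctmx P = P by rewrite -FP (form_herm Hh sr sr).
have Pu : P \in unitmx by apply: (schur_unit U jM sr rj or).
have GQ : G *m ctmx Q = - P by rewrite -PH PQ ctmxN ctmxM ctmxK opprK.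
have /andP [Gu Qu] : (G \in unitmx) && (- ctmx Q \in unitmx).
  by rewrite -unitmx_mul mulmxN GQ opprK.
split; first exact: Gu.
set d := fun l => (y l - y' l) + invmx G *m r l.
have md : forall i, (i < j)%N -> mom h d i = 0.
  move=> i ij; rewrite /d mom_add mom_mull mom_add mom_opp (my i (ltnW ij)) (my' i ij).
  by rewrite (or i ij) mulmx0 subrr addr0.
have sd : supp d j.+1.
  by move=> l jl; rewrite /d (sy l jl) (sy'1 l jl) (sr l jl) mulmx0 subrr addr0.
have d0 : forall l, d l = 0.
  apply: (zero_of_moms U jM sd).
  move=> i; rewrite leq_eqVlt => /orP [/eqP ->|]; last by apply: md.
  rewrite -(form_mono jN' sr rj md) /d form_add form_mull form_add form_opp FP.
  have -> : form h y' r = 0.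
    by rewrite -(form_herm Hh sr sy'1) (form_orth0 sy' or) ctmx0.
  have -> : form h y r = ctmx Q.
    rewrite /Q /mom ctmx_sum /form; apply: eq_bigr => i0 _.
    case: (leqP i0 j) => ij.
      rewrite (my i0 ij) ctmxM addn0 (Hk i0) //; lia.
    by rewrite (sr i0 ij) ctmx0 mulmx0 mul0mx ctmx0.
  have -> : ctmx Q = - (invmx G *m P).
    by rewrite -mulmxN -GQ mulKmx.
  by rewrite oppr0 addr0 addNr.
have -> : mom k y 0 - mom k y' 0 = mom k (fun l => y l - y' l) 0 by rewrite mom_add mom_opp.
rewrite -mulmxN -mom_opp -mom_mull; apply: eq_mom => l.
by have := d0 l; rewrite /d => /eqP; rewrite addr_eq0 => /eqP ->; rewrite mulmxN.
Qed.

End Poly.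

Section Trans.
Variables (C : numClosedFieldType) (q N : nat).
Local Notation bd := (bd q).

Lemma mom_hankel r m f (X : 'M[C]_(r, bd m)) : (m <= N)%N ->
  X *m hankel m f = browr m (fun i => mom N f (cf X) i).
Proof.
move=> mN; rewrite -{1}(browr_cf X) browr_hankel; apply: eq_browr => i _.
rewrite /mom (sum_supp (F := fun l => cf X l *m f (l + i)%N) mN) //.
by move=> l ml; rewrite (cf_supp X ml) mul0mx.
Qed.

Lemma hform r r' m f (c : nat -> 'M[C]_(r, q)) (d : nat -> 'M[C]_(r', q)) : (m <= N)%N ->
  supp c m -> supp d m ->
  browr m c *m hankel m f *m ctmx (browr m d) = form N f c d.
Proof.
move=> mN sc sd; rewrite mom_hankel // ctmx_browr browr_bcolr /form.
rewrite (sum_supp (F := fun i => mom N f c i *m ctmx (d i)) mN); last first.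
  by move=> i mi; rewrite (sd i mi) ctmx0 mulmx0.
apply: eq_bigr => i _; congr (_ *m _).
apply: eq_bigr => l _; case: (ltnP l m) => lm; first by rewrite cf_browr lm.
by rewrite cf_browr ltnNge lm /= (sc l lm).
Qed.

Lemma pd_U m (f : nat -> 'M[C]_q) : posdef (hankel m f) -> (m <= N)%N -> Uprop N f m.
Proof.
move=> [_ pd] mN r c sc F0 l.
set X := browr m c.
have XHX : X *m hankel m f *m ctmx X = 0 by rewrite hform.
have X0 : X = 0.
  apply/row_matrixP => t; rewrite row0.
  apply/eqP; apply: contraT => nz.
  have : ctmx (row t X) != 0.
    by apply: contra nz => /eqP e; rewrite -(ctmxK (row t X)) e ctmx0.
  move=> /pd; rewrite ctmxK !rowE ctmxM -!mulmxA (mulmxA X) (mulmxA (X *m _)) XHX.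
  by rewrite mul0mx mulmx0 mxE ltxx.
case: (ltnP l m) => lm; last exact: sc.
by have := @cf_browr C q r m c l; rewrite -/X X0 lm => <-; rewrite /cf; case: insub => //= i; rewrite /submxrow; apply/matrixP => ? ?; rewrite !mxE.
Qed.

Lemma pd_unit m M (f : nat -> 'M[C]_q) : posdef (hankel M f) -> (m <= M)%N -> (M <= N)%N ->
  hankel m f \in unitmx.
Proof.
move=> pd mM MN; have U := pd_U pd MN.
apply: inj_unit => v vH.
have sv : supp (cf v) m by move=> l; apply: cf_supp.
have c0 : forall l, cf v l = 0.
  apply: (U _ (cf v)); first by move=> l Ml; apply: sv; apply: leq_trans Ml.
  by rewrite -(@hform _ _ m) ?(leq_trans mM) // browr_cf vH mul0mx.
rewrite -(browr_cf v); apply/matrixP => i t; by rewrite browr_entry c0 !mxE.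
Qed.

Lemma dualP r m f (Z : 'M[C]_(r, bd m)) : hankel m f \in unitmx -> (m <= N)%N ->
  forall i, (i < m)%N -> mom N f (cf (Z *m invmx (hankel m f))) i = cf Z i.
Proof.
move=> U mN i im.
have := mom_hankel f (Z *m invmx (hankel m f)) mN; rewrite mulmxKV // => E.
by rewrite [in RHS]E cf_browr im.
Qed.

End Trans.

Section Trans2.
Variables (C : numClosedFieldType) (q N : nat).
Local Notation bd := (bd q).

Lemma cf_opp r m (X : 'M[C]_(r, bd m)) l : cf (- X) l = - cf X l.
Proof. by rewrite /cf; case: insub => [i|] /=; rewrite ?submxrowN ?oppr0. Qed.

Lemma orthP m (f : nat -> 'M[C]_q) : hankel m f \in unitmx -> (m < N)%N ->
  (forall i, (i < m)%N -> ctmx (f (m + i)%N) = f (m + i)%N) ->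
  let c := cf (rowI (- (ctmx (bcol m (fun l => f (m + l)%N)) *m invmx (hankel m f)))) in
  [/\ supp c m.+1, c m = 1%:M & forall i, (i < m)%N -> mom N f c i = 0].
Proof.
move=> U mN Hf c.
set X := - (ctmx (bcol m (fun l => f (m + l)%N)) *m invmx (hankel m f)).
have cE : forall l, c l = cf X l + (if l == m then 1%:M else 0).
  move=> l; rewrite /c rowIE cf_browr.
  case: (ltngtP l m) => lm.
  - by rewrite ltnS ltnW // addr0.
  - by rewrite ltnNge lm /= (cf_supp X (ltnW lm)) addr0.
  - by rewrite lm ltnSn (cf_supp X (leqnn m)) add0r.
split.
- by move=> l ml; rewrite cE (cf_supp X (ltnW ml)) (gtn_eqF ml) addr0.
- by rewrite cE eqxx (cf_supp X (leqnn m)) add0r.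
move=> i im.
rewrite (eq_mom N f i cE) mom_add.
have -> : mom N f (fun l => if l == m then 1%:M else 0) i = f (m + i)%N.
  rewrite /mom (@sum_single N _ (fun l => (if l == m then 1%:M else 0) *m f (l + i)%N) m mN).
    by rewrite eqxx mul1mx.
  by move=> l /negbTE ->; rewrite mul0mx.
have XH : X *m hankel m f = - ctmx (bcol m (fun l => f (m + l)%N)).
  by rewrite /X mulNmx mulmxKV.
have := mom_hankel f X (ltnW mN); rewrite XH => E.
have : cf (- ctmx (bcol m (fun l => f (m + l)%N))) i = mom N f (cf X) i.
  by rewrite E cf_browr im.
rewrite (_ : bcol m _ = bcolr m (fun l => f (m + l)%N)) // cf_opp ctmx_bcolr cf_browr im (Hf i im) => <-.
by rewrite addNr.
Qed.

Lemma bcolr_vmx j : vmx C q j = bcolr j.+1 (fun l => if l == 0%N then 1%:M else 0).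
Proof. by []. Qed.

Lemma IaT_bcolr r j (a : C) (G : nat -> 'M[C]_(q, r)) :
  (1%:M - a *: Tmx C q j) *m bcolr j.+1 G =
  bcolr j.+1 (fun l => G l - a *: (if l is l'.+1 then G l' else 0)).
Proof.
rewrite mulmxBl mul1mx -scalemxAl Tmx_bcolr bcolrZ bcolrN bcolrD.
by [].
Qed.

Lemma Rmx_vmx j (a : C) :
  Rmx q j a *m vmx C q j = bcolr j.+1 (fun l => a ^+ l *: 1%:M).
Proof.
have E : (1%:M - a *: Tmx C q j) *m bcolr j.+1 (fun l => a ^+ l *: 1%:M) = vmx C q j.
  rewrite IaT_bcolr bcolr_vmx; apply: eq_bcolr => [[|l]] _ /=.
    by rewrite expr0 scaler0 subr0 scale1r.
  by rewrite scalerA -exprS subrr.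
by rewrite /Rmx -E mulKmx // unit_IaT.
Qed.

Variables (s : nat -> 'M[C]_q) (a b : C).
Definition kk := fun i => b *: s i - s i.+1.

Lemma hk i : shat s a b i = kk i.+1 - a *: kk i.
Proof. by apply/matrixP => x y; rewrite /shat /kk !mxE; ring. Qed.

Lemma Rmx_u j :
  Rmx q j a *m (u2 s a b j + a *: (vmx C q j *m s 0)) = - bcolr j.+1 kk.
Proof.
have E : (1%:M - a *: Tmx C q j) *m (- bcolr j.+1 kk) = u2 s a b j + a *: (vmx C q j *m s 0).
  rewrite mulmxN IaT_bcolr bcolrN bcolr_vmx bcolr_mul bcolrZ /u2.
  rewrite (_ : bcol _ _ = bcolr j.+1 (fun l => if l is l'.+1 then - shat s a b l' else u20 s a b)) //.
  rewrite bcolrD; apply: eq_bcolr => [[|l]] _ /=.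
    rewrite mul1mx scaler0 subr0 /u20 /kk.
    by apply/matrixP => x y; rewrite !mxE; ring.
  by rewrite mul0mx scaler0 addr0 hk.
by rewrite /Rmx -E mulKmx // unit_IaT.
Qed.
End Trans2.

Section Fin.
Variables (C : numClosedFieldType) (q N : nat) (a : C).

Definition delta0 : nat -> 'M[C]_q := fun l => if l == 0%N then 1%:M else 0.

Lemma L6 m (c : nat -> 'M[C]_q) : supp c m -> (m <= N)%N ->
  browr m c *m bcolr m (fun l => a ^+ l *: 1%:M) = ev N a c.
Proof.
move=> sc mN; rewrite browr_bcolr /ev (sum_supp (F := fun l => a ^+ l *: c l) mN).
  by apply: eq_bigr => l _; rewrite -scalemxAr mulmx1.
by move=> l ml; rewrite (sc l ml) scaler0.
Qed.

Lemma L7 m (c : nat -> 'M[C]_q) k : supp c m -> (m <= N)%N ->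
  browr m c *m bcolr m k = mom N k c 0.
Proof.
move=> sc mN; rewrite browr_bcolr /mom (sum_supp (F := fun l => c l *m k (l + 0)%N) mN).
  by apply: eq_bigr => l _; rewrite addn0.
by move=> l ml; rewrite (sc l ml) mul0mx.
Qed.

Lemma ev_delta0 : (0 < N)%N -> ev N a delta0 = 1%:M.
Proof.
move=> N0; rewrite /ev (@sum_single N _ (fun l => a ^+ l *: delta0 l) 0 N0).
  by rewrite /delta0 eqxx expr0 scale1r.
by move=> l /negbTE; rewrite /delta0 => ->; rewrite scaler0.
Qed.

Lemma mom_delta0 k : (0 < N)%N -> mom N k delta0 0 = k 0%N.
Proof.
move=> N0; rewrite /mom (@sum_single N _ (fun l => delta0 l *m k (l + 0)%N) 0 N0).
  by rewrite /delta0 eqxx mul1mx.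
by move=> l /negbTE; rewrite /delta0 => ->; rewrite mul0mx.
Qed.

Lemma ev0 : ev N a (fun _ => 0 : 'M[C]_q) = 0.
Proof. by rewrite /ev big1 // => l _; rewrite scaler0. Qed.

Lemma quadE m r (A : 'M[C]_m) (B : 'M[C]_(m, r)) (X : 'M[C]_m) :
  ctmx B *m ctmx A *m X *m A *m B = ctmx (A *m B) *m X *m (A *m B).
Proof. by rewrite ctmxM !mulmxA. Qed.

End Fin.

Theorem mainTheorem10 (C : numClosedFieldType) (q n : nat)
    (s : nat -> 'M[C]_q) (a b : C) :
  (0 < q)%N -> (0 < n)%N ->
  a \is Num.real -> b \is Num.real -> a < b ->
  (forall i, (i <= 2 * n + 1)%N -> hermmx (s i)) ->
  posdef (H1 s n) -> posdef (H2 s a b n.-1) ->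
  posdef (K1 s b n) -> posdef (K2 s a n) ->
  (forall j, (j <= n.-1)%N ->
     [/\ Q2 s a b j a \in unitmx,
         mbold s a b j = invmx (Q2 s a b j a) *m Gamma1 s b j a,
         Gamma1 s b j.+1 a \in unitmx &
         lbold s a b j = - (invmx (Gamma1 s b j.+1 a) *m Q2 s a b j a)])
  /\ mbold s a b 0 = invmx (Q2 s a b 0 a).
Proof.
move=> q0 n0 ar br ab hs pH1 pH2 pK1 pK2.
pose N := n.+2.
have N0 : (0 < N)%N by [].
have ha : a^* = a by apply: conj_Creal.
have hb : b^* = b by apply: conj_Creal.
pose k := kk s b.
pose h := shat s a b.
have hk' : forall i, h i = k i.+1 - a *: k i by move=> i; apply: hk.
have Hk : forall i, (i <= 2 * n)%N -> ctmx (k i) = k i.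
  move=> i ilt; rewrite /k /kk ctmxB ctmxZ hb.
  by rewrite (hs i _) ?(hs i.+1 _) //; lia.
have Hh : forall i, (i.+1 <= 2 * n)%N -> ctmx (h i) = h i.
  by move=> i ilt; rewrite hk' ctmxB ctmxZ ha !Hk //; lia.
have Uk : Uprop N k n.+1 by apply: (pd_U pK1).
have Uh : Uprop N h n.-1.+1 by apply: (pd_U pH2); rewrite /N; lia.
have Kunit : forall j, (j <= n)%N -> K1 s b j \in unitmx.
  by move=> j jn; apply: (pd_unit pK1) => //; rewrite /N.
have Hunit : forall j, (j <= n.-1)%N -> H2 s a b j \in unitmx.
  by move=> j jn; apply: (pd_unit pH2) => //; rewrite /N; lia.
pose pp j := if j is j'.+1 then
    cf (rowI (- (ctmx (Yt1 s b j'.+1) *m invmx (K1 s b j')))) else delta0 C q.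
pose rr j := if j is j'.+1 then
    cf (rowI (- (ctmx (Y2 s a b j'.+1) *m invmx (H2 s a b j')))) else delta0 C q.
pose zz j := cf (ctmx (bcolr j.+1 (fun l => a ^+ l *: (1%:M : 'M[C]_q))) *m invmx (K1 s b j)).
pose zz' j := if j is j'.+1 then zz j' else (fun _ => 0 : 'M[C]_q).
pose yy j := cf (ctmx (bcolr j.+1 k) *m invmx (H2 s a b j)).
pose yy' j := if j is j'.+1 then yy j' else (fun _ => 0 : 'M[C]_q).
have d0s : supp (delta0 C q) 1 by move=> l; rewrite /delta0; case: l.
have Fp : forall j, (j <= n)%N ->
    [/\ supp (pp j) j.+1, pp j j = 1%:M & forall i, (i < j)%N -> mom N k (pp j) i = 0].
  case => [|j] jn; first by split => //; rewrite /delta0.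
  have := @orthP C q N j.+1 k (Kunit j (ltnW jn)) _ _.
  apply; first by rewrite /N; lia.
  by move=> i ij; apply: Hk; lia.
have Fr : forall j, (j <= n.-1)%N ->
    [/\ supp (rr j) j.+1, rr j j = 1%:M & forall i, (i < j)%N -> mom N h (rr j) i = 0].
  case => [|j] jn; first by split => //; rewrite /delta0.
  have := @orthP C q N j.+1 h (Hunit j _) _ _.
  apply; first by lia.
    by rewrite /N; lia.
  by move=> i ij; apply: Hh; lia.
have Fz : forall j, (j <= n)%N ->
    supp (zz j) j.+1 /\ forall i, (i <= j)%N -> mom N k (zz j) i = a ^+ i *: 1%:M.
  move=> j jn; split; first by move=> l; apply: cf_supp.
  move=> i ij; rewrite (dualP _ (Kunit j jn)) //; last by rewrite /N; lia.
  rewrite ctmx_bcolr cf_browr ltnS ij ctmxZ ctmx1 rmorphXn; congr (_ ^+ _ *: _); exact: ha.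
have Fy : forall j, (j <= n.-1)%N ->
    supp (yy j) j.+1 /\ forall i, (i <= j)%N -> mom N h (yy j) i = k i.
  move=> j jn; split; first by move=> l; apply: cf_supp.
  move=> i ij; rewrite (dualP _ (Hunit j jn)) //; last by rewrite /N; lia.
  by rewrite ctmx_bcolr cf_browr ltnS ij Hk //; lia.
have TG : forall j, (j <= n)%N -> Gamma1 s b j a = ev N a (pp j).
  case => [|j] jn; first by rewrite ev_delta0.
  rewrite /Gamma1 -mulmxA Rmx_vmx -[rowI _]browr_cf (L6 (N:=N)) //;
  try (by move=> l; apply: cf_supp); by rewrite /N; clear -jn; lia.
have TQ : forall j, (j <= n)%N -> Q2 s a b j a = mom N k (rr j) 0.
  case => [|j] jn.
    rewrite mom_delta0 // /Q2 /u20 /k /kk.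
    by apply/matrixP => x y; rewrite !mxE; ring.
  rewrite /Q2 -mulmxA Rmx_u mulmxN opprK -[rowI _]browr_cf (L7 (N:=N)) //;
  try (by move=> l; apply: cf_supp); by rewrite /N; clear -jn; lia.
have Tmu : forall j, (j <= n)%N -> mu s a b j = ev N a (zz j).
  move=> j jn; rewrite /mu quadE Rmx_vmx -[_ *m invmx _]browr_cf (L6 (N:=N)) //;
  try (by move=> l; apply: cf_supp); by rewrite /N; clear -jn; lia.
have Tlam : forall j, (j <= n)%N -> lambda s a b j = mom N k (yy j) 0.
  move=> j jn; rewrite /lambda quadE Rmx_u ctmxN !mulNmx !mulmxN opprK.
  rewrite -[_ *m invmx _]browr_cf (L7 (N:=N)) //;
  try (by move=> l; apply: cf_supp); by rewrite /N; clear -jn; lia.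
have Fz' : forall j, (j <= n)%N ->
    supp (zz' j) j /\ forall i, (i < j)%N -> mom N k (zz' j) i = a ^+ i *: 1%:M.
  case => [|j] jn; first by split => // l _.
  have [s1 m1] := Fz j (ltnW jn); split; first exact: s1.
  by move=> i ij; apply: m1; exact: ij.
have Fy' : forall j, (j <= n.-1)%N ->
    supp (yy' j) j /\ forall i, (i < j)%N -> mom N h (yy' j) i = k i.
  case => [|j] jn; first by split => // l _.
  have jn' : (j <= n.-1)%N by clear -jn; lia.
  have [s1 m1] := Fy j jn'; split; first exact: s1.
  by move=> i ij; apply: m1; exact: ij.
have Emb : forall j, (j <= n)%N -> mbold s a b j = ev N a (zz j) - ev N a (zz' j).
  case => [|j] jn; first by rewrite /= ev0 subr0 Tmu.
  by rewrite /mbold Tmu // Tmu //; clear -jn; lia.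
have mom0 : mom N k (fun _ => 0 : 'M[C]_q) 0 = 0.
  by rewrite /mom big1 // => l _; rewrite mul0mx.
have Elb : forall j, (j <= n)%N -> lbold s a b j = mom N k (yy j) 0 - mom N k (yy' j) 0.
  case => [|j] jn; first by rewrite /= mom0 subr0 Tlam.
  by rewrite /lbold Tlam // Tlam //; clear -jn; lia.
have main : forall j, (j <= n.-1)%N ->
     [/\ Q2 s a b j a \in unitmx,
         mbold s a b j = invmx (Q2 s a b j a) *m Gamma1 s b j a,
         Gamma1 s b j.+1 a \in unitmx &
         lbold s a b j = - (invmx (Gamma1 s b j.+1 a) *m Q2 s a b j a)].
  move=> j jn.
  have jn' : (j <= n)%N by clear -jn; lia.
  have jn1 : (j.+1 <= n)%N by clear -jn n0; lia.
  have [sp pj op] := Fp j jn'.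
  have [sr rj or] := Fr j jn.
  have [sz mz] := Fz j jn'.
  have [sz' mz'] := Fz' j jn'.
  have [sy my] := Fy j jn.
  have [sy' my'] := Fy' j jn.
  have [sp1 pj1 op1] := Fp j.+1 jn1.
  have Hk1 : forall i, (i <= 2 * j)%N -> ctmx (k i) = k i.
    by move=> i ij; apply: Hk; clear -ij jn; lia.
  have Hk2 : forall i, (i <= 2 * j.+1)%N -> ctmx (k i) = k i.
    by move=> i ij; apply: Hk; clear -ij jn n0; lia.
  have Hh2 : forall i, (i <= 2 * j)%N -> ctmx (h i) = h i.
    by move=> i ij; apply: Hh; clear -ij jn n0; lia.
  have jM1 : (j < n.+1)%N by clear -jn'; lia.
  have jN1 : (j < N)%N by rewrite /N; clear -jn'; lia.
  have jM2 : (j < n.-1.+1)%N by clear -jn n0; lia.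
  have jN2 : (j.+1 < N)%N by rewrite /N; clear -jn'; lia.
  have op1' : forall i, (i <= j)%N -> mom N k (pp j.+1) i = 0.
    by move=> i ij; apply: op1; exact: ij.
  have [Qu Ez] := C1 ha hk' Uk jM1 jN1 Hk1 sp pj op sr rj or sz mz sz' mz'.
  have [Gu Ey] := C2 ha hk' Uh jM2 jN2 Hk2 Hh2 sp1 pj1 op1' sr rj or sy my sy' my'.
  rewrite (TQ j jn') (TG j jn') (TG j.+1 jn1) (Emb j jn') (Elb j jn').
  by split.
split; first exact: main.
have [_ E0 _ _] := main 0%N (leq0n _).
by rewrite E0 /= mulmx1.
Qed.
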